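(* Let $C=(c_{ij})_{1\le i,j\le 8}$ be the Cartan matrix of type $E_8$: $c_{ii}=2$, $c_{ij}=c_{ji}=-1$ for $\{i,j\} \in \{\{1,3\},\{3,4\},\{4,5\},\{5,6\},\{6,7\},\{7,8\},\{2,4\}\}$, and $c_{ij}=0$ otherwise. Let $e_1,\dots,e_8$ be the standard basis of $\mathbb{Z}^8$, define $s_i \in \mathrm{GL}_8(\mathbb{Z})$ by $s_i(e_j) = e_j - c_{ji} e_i$, and let $w = s_7 s_8 s_6 s_2 s_1 s_3 s_4 s_5$. Then for every prime power $q$, the group $\mathbb{Z}^8/(q w - \mathrm{id})\mathbb{Z}^8$ is cyclic of order $\Phi_{30}(q) = q^8+q^7-q^5-q^4-q^3+q+1$, the $30$-th cyclotomic polynomial evaluated at $q$. *)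

(* Defs.v *)
From HB Require Import structures.
From mathcomp Require Import all_boot all_order all_algebra.
Set Implicit Arguments. Unset Strict Implicit. Unset Printing Implicit Defensive.
Import Order.TTheory GRing.Theory Num.Theory.
Local Open Scope ring_scope.

(* Edges of the E8 Dynkin diagram (Bourbaki numbering, 1-based). *)
Definition E8_edge (i j : nat) : bool :=
  [|| (i == 1) && (j == 3)%N, (i == 3) && (j == 4)%N, (i == 4) && (j == 5)%N,
      (i == 5) && (j == 6)%N, (i == 6) && (j == 7)%N, (i == 7) && (j == 8)%N
    | (i == 2) && (j == 4)%N]%N.

(* Cartan matrix C of type E8; entry (i,j) with 0-based ordinals stands for c_{i+1,j+1}. *)
Definition cartanE8 : 'M[int]_8 :=
  \matrix_(i, j) (if i == j then 2
                  else if E8_edge i.+1 j.+1 || E8_edge j.+1 i.+1 then -1 else 0).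

(* Simple reflection s_i (0-based index) acting on column vectors:
   s_i(e_j) = e_j - c_{ji} e_i, i.e. column j of the matrix is e_j - c_{ji} e_i. *)
Definition simple_refl (i : 'I_8) : 'M[int]_8 :=
  \matrix_(k, j) ((k == j)%:R - cartanE8 j i * (k == i)%:R).

Definition s (n : nat) : 'M[int]_8 := simple_refl (inord n.-1).

Definition wE8 : 'M[int]_8 :=
  s 7 *m s 8 *m s 6 *m s 2 *m s 1 *m s 3 *m s 4 *m s 5.

Definition qw_minus_id (q : nat) : 'M[int]_8 := (q%:Z) *: wE8 - 1%:M.

(* Phi_30(q) = q^8+q^7-q^5-q^4-q^3+q+1 (as a natural number; positive for q >= 1) *)
Definition Phi30 (q : nat) : nat :=
  (q ^ 8 + q ^ 7 + q + 1 - (q ^ 5 + q ^ 4 + q ^ 3))%N.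

(* Main.v *)
Require Import Defs.
From HB Require Import structures.
From mathcomp Require Import all_boot all_order all_algebra.
From mathcomp Require Import ring zify.
Import GRing.Theory.
Local Open Scope ring_scope.
Definition Wl_old : seq (seq int) :=
 [:: [:: 0; 1; 0; 0; -1; 1; 0; 0]; [:: 0; 0; 1; 0; -1; 1; 0; 0]; [:: 1; 1; 0; 0; -1; 1; 0; 0]; [:: 0; 1; 1; 0; -1; 1; 0; 0]; [:: 0; 0; 0; 1; -1; 1; 0; 0]; [:: 0; 0; 0; 1; -1; 0; 1; 0]; [:: 0; 0; 0; 1; -1; 0; 1; -1]; [:: 0; 0; 0; 0; 0; 0; 1; -1]].

Lemma sum_delta (F : 'I_8 -> int) j : \sum_(l < 8) F l * (l == j)%:R = F j.
Proof.
rewrite (bigD1 j) //= eqxx mulr1 big1 ?addr0 // => l /negbTE ->; by rewrite mulr0.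
Qed.

Lemma mul_sr (A : 'M[int]_8) i :
  A *m simple_refl i = \matrix_(k, j) (A k j - cartanE8 j i * A k i).
Proof.
apply/matrixP => k j; rewrite [LHS]mxE [RHS]mxE.
under eq_bigr => l _ do rewrite [simple_refl _ _ _]mxE mulrBr mulrCA.
by rewrite sumrB sum_delta -mulr_sumr sum_delta.
Qed.


Definition mxl (l : seq (seq int)) : 'M[int]_8 := \matrix_(i,j) nth 0 (nth [::] l i) j.
Definition cE8 (j i : nat) : int :=
  if j == i then 2 else if E8_edge j.+1 i.+1 || E8_edge i.+1 j.+1 then -1 else 0.
Definition step_ok (Al Bl : seq (seq int)) (i : nat) : bool :=
  all (fun k => all (fun j => nth 0 (nth [::] Bl k) j ==
     nth 0 (nth [::] Al k) j - cE8 j i * nth 0 (nth [::] Al k) i) (iota 0 8)) (iota 0 8).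
Lemma step Al Bl i : step_ok Al Bl i -> (i < 8)%N ->
  mxl Al *m simple_refl (inord i) = mxl Bl.
Proof.
move=> H Hi; rewrite mul_sr; apply/matrixP => k j; rewrite !mxE inordK //.
have Hk : (nat_of_ord k \in iota 0 8) by rewrite mem_iota leq0n add0n ltn_ord.
have Hj : (nat_of_ord j \in iota 0 8) by rewrite mem_iota leq0n add0n ltn_ord.
move/allP: H => /(_ _ Hk) /allP /(_ _ Hj) /eqP ->.
have -> : (j == inord i :> 'I_8) = (nat_of_ord j == i) by rewrite -(inj_eq val_inj) /= inordK.
by rewrite /cE8.
Qed.
Definition Il : seq (seq int) := [:: [:: 1; 0; 0; 0; 0; 0; 0; 0]; [:: 0; 1; 0; 0; 0; 0; 0; 0]; [:: 0; 0; 1; 0; 0; 0; 0; 0]; [:: 0; 0; 0; 1; 0; 0; 0; 0]; [:: 0; 0; 0; 0; 1; 0; 0; 0]; [:: 0; 0; 0; 0; 0; 1; 0; 0]; [:: 0; 0; 0; 0; 0; 0; 1; 0]; [:: 0; 0; 0; 0; 0; 0; 0; 1]].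
Lemma I_mxl : 1%:M = mxl Il.
Proof.
apply/matrixP => k j; rewrite !mxE.
by case: k => [[|[|[|[|[|[|[|[|//]]]]]]]] Hk]; case: j => [[|[|[|[|[|[|[|[|//]]]]]]]] Hj].
Qed.
Definition P0l : seq (seq int) := [:: [:: 1; 0; 0; 0; 0; 0; 0; 0]; [:: 0; 1; 0; 0; 0; 0; 0; 0]; [:: 0; 0; 1; 0; 0; 0; 0; 0]; [:: 0; 0; 0; 1; 0; 0; 0; 0]; [:: 0; 0; 0; 0; 1; 0; 0; 0]; [:: 0; 0; 0; 0; 0; 1; 0; 0]; [:: 0; 0; 0; 0; 0; 1; -1; 1]; [:: 0; 0; 0; 0; 0; 0; 0; 1]].
Definition P1l : seq (seq int) := [:: [:: 1; 0; 0; 0; 0; 0; 0; 0]; [:: 0; 1; 0; 0; 0; 0; 0; 0]; [:: 0; 0; 1; 0; 0; 0; 0; 0]; [:: 0; 0; 0; 1; 0; 0; 0; 0]; [:: 0; 0; 0; 0; 1; 0; 0; 0]; [:: 0; 0; 0; 0; 0; 1; 0; 0]; [:: 0; 0; 0; 0; 0; 1; 0; -1]; [:: 0; 0; 0; 0; 0; 0; 1; -1]].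
Definition P2l : seq (seq int) := [:: [:: 1; 0; 0; 0; 0; 0; 0; 0]; [:: 0; 1; 0; 0; 0; 0; 0; 0]; [:: 0; 0; 1; 0; 0; 0; 0; 0]; [:: 0; 0; 0; 1; 0; 0; 0; 0]; [:: 0; 0; 0; 0; 1; 0; 0; 0]; [:: 0; 0; 0; 0; 1; -1; 1; 0]; [:: 0; 0; 0; 0; 1; -1; 1; -1]; [:: 0; 0; 0; 0; 0; 0; 1; -1]].
Definition P3l : seq (seq int) := [:: [:: 1; 0; 0; 0; 0; 0; 0; 0]; [:: 0; -1; 0; 1; 0; 0; 0; 0]; [:: 0; 0; 1; 0; 0; 0; 0; 0]; [:: 0; 0; 0; 1; 0; 0; 0; 0]; [:: 0; 0; 0; 0; 1; 0; 0; 0]; [:: 0; 0; 0; 0; 1; -1; 1; 0]; [:: 0; 0; 0; 0; 1; -1; 1; -1]; [:: 0; 0; 0; 0; 0; 0; 1; -1]].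
Definition P4l : seq (seq int) := [:: [:: -1; 0; 1; 0; 0; 0; 0; 0]; [:: 0; -1; 0; 1; 0; 0; 0; 0]; [:: 0; 0; 1; 0; 0; 0; 0; 0]; [:: 0; 0; 0; 1; 0; 0; 0; 0]; [:: 0; 0; 0; 0; 1; 0; 0; 0]; [:: 0; 0; 0; 0; 1; -1; 1; 0]; [:: 0; 0; 0; 0; 1; -1; 1; -1]; [:: 0; 0; 0; 0; 0; 0; 1; -1]].
Definition P5l : seq (seq int) := [:: [:: 0; 0; -1; 1; 0; 0; 0; 0]; [:: 0; -1; 0; 1; 0; 0; 0; 0]; [:: 1; 0; -1; 1; 0; 0; 0; 0]; [:: 0; 0; 0; 1; 0; 0; 0; 0]; [:: 0; 0; 0; 0; 1; 0; 0; 0]; [:: 0; 0; 0; 0; 1; -1; 1; 0]; [:: 0; 0; 0; 0; 1; -1; 1; -1]; [:: 0; 0; 0; 0; 0; 0; 1; -1]].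
Definition P6l : seq (seq int) := [:: [:: 0; 1; 0; -1; 1; 0; 0; 0]; [:: 0; 0; 1; -1; 1; 0; 0; 0]; [:: 1; 1; 0; -1; 1; 0; 0; 0]; [:: 0; 1; 1; -1; 1; 0; 0; 0]; [:: 0; 0; 0; 0; 1; 0; 0; 0]; [:: 0; 0; 0; 0; 1; -1; 1; 0]; [:: 0; 0; 0; 0; 1; -1; 1; -1]; [:: 0; 0; 0; 0; 0; 0; 1; -1]].
Definition P7l : seq (seq int) := [:: [:: 0; 1; 0; 0; -1; 1; 0; 0]; [:: 0; 0; 1; 0; -1; 1; 0; 0]; [:: 1; 1; 0; 0; -1; 1; 0; 0]; [:: 0; 1; 1; 0; -1; 1; 0; 0]; [:: 0; 0; 0; 1; -1; 1; 0; 0]; [:: 0; 0; 0; 1; -1; 0; 1; 0]; [:: 0; 0; 0; 1; -1; 0; 1; -1]; [:: 0; 0; 0; 0; 0; 0; 1; -1]].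
Definition Wl := P7l.
Lemma wE8_W : wE8 = mxl Wl.
Proof.
rewrite /wE8 /s /= -[simple_refl (inord 6)]mul1mx I_mxl.
rewrite (@step Il P0l 6) // (@step P0l P1l 7) // (@step P1l P2l 5) // (@step P2l P3l 1) //.
rewrite (@step P3l P4l 0) // (@step P4l P5l 2) // (@step P5l P6l 3) // (@step P6l P7l 4) //.
Qed.
Definition Yf (x : nat -> int) (n : nat) : int := nth 0 [:: (- x 2 + x 3 - x 6 + x 7); (- x 1 - x 2 + x 3 + x 4 - x 6); (- x 0 - x 1 + 2 * x 4 - x 5); (- x 0 - x 1 + x 4); (- x 3 + x 4); (x 2 - x 3); (x 1 - x 4); (x 0 - x 2 + x 3 - x 4)] n.
Definition Gf (q : int) (x : nat -> int) : int :=
  q ^+ 7 * Yf x 0 + q ^+ 6 * Yf x 1 + q ^+ 5 * Yf x 2 + q ^+ 4 * Yf x 3 + q ^+ 3 * Yf x 4 + q ^+ 2 * Yf x 5 + q * Yf x 6 + Yf x 7.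
Definition Mxf (q : int) (x : nat -> int) (n : nat) : int := nth 0 [:: q * (x 1 - x 4 + x 5) - x 0; q * (x 2 - x 4 + x 5) - x 1; q * (x 0 + x 1 - x 4 + x 5) - x 2; q * (x 1 + x 2 - x 4 + x 5) - x 3; q * (x 3 - x 4 + x 5) - x 4; q * (x 3 - x 4 + x 6) - x 5; q * (x 3 - x 4 + x 6 - x 7) - x 6; q * (x 6 - x 7) - x 7] n.
Definition Uf (q k : int) (x : nat -> int) (n : nat) : int :=
  let y0 := Yf x 0 in let y1 := Yf x 1 in let y2 := Yf x 2 in let y3 := Yf x 3 in let y4 := Yf x 4 in let y5 := Yf x 5 in let y6 := Yf x 6 in let y7 := Yf x 7 in let u7 := (- k) in let u0 := (q * (-1) * (- k) - y0) in let u1 := (q * u0 + q * (-1) * u7 - y1) in let u2 := (q * u1 + q * (0) * u7 - y2) in let u3 := (q * u2 + q * (1) * u7 - y3) in let u4 := (q * u3 + q * (1) * u7 - y4) in let u5 := (q * u4 + q * (1) * u7 - y5) in let u6 := (q * u5 + q * (0) * u7 - y6) in  nth 0 [:: (- u3 - u6); (- u3 - u5 - u7); (- u3 - u4 - u6 - u7); (- u3 - u4 - u5 - u6 - u7); (- u3 - u5 - u6 - u7); (- u2 - u5 - u6 - u7); (- u1 - u5 - u6); (u0 - u1 - u6)] n.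
Definition b7 : seq int := [:: 0; -1; -1; -1; -1; -1; 0; 0].

Definition Nz (q : int) : int := q ^+ 8 + q ^+ 7 - q ^+ 5 - q ^+ 4 - q ^+ 3 + q + 1.

Lemma key1 q x : Gf q (Mxf q x) = - Nz q * Yf x 7.
Proof. rewrite /Gf /Mxf /Yf /Nz /=; ring. Qed.

Lemma key2 q k x : Gf q x = k * Nz q -> forall n, (n < 8)%N -> Mxf q (Uf q k x) n = x n.
Proof.
move=> H n Hn.
have : Mxf q (Uf q k x) n - x n = nth 0 b7 n * (k * Nz q - Gf q x).
  by case: n Hn => [|[|[|[|[|[|[|[|//]]]]]]]] _; rewrite /Gf /Mxf /Uf /Yf /Nz /=; ring.
by rewrite H subrr mulr0 => /eqP; rewrite subr_eq0 => /eqP.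
Qed.

Lemma key3 q (m : int) : Gf q (fun n => m * nth 0 b7 n) = m.
Proof. rewrite /Gf /Yf /=; ring. Qed.

Lemma Mcol (q : nat) (x : nat -> int) n : (n < 8)%N ->
  (qw_minus_id q *m \col_i x i) (inord n) 0 = Mxf q%:Z x n.
Proof.
move=> Hn; rewrite /qw_minus_id mulmxBl -scalemxAl mul1mx wE8_W.
rewrite !mxE !big_ord_recr big_ord0 /= !mxE inordK //.
by case: n Hn => [|[|[|[|[|[|[|[|//]]]]]]]] _; rewrite /Mxf /=; ring.
Qed.

Lemma Gf_ext q x y : (forall n, (n < 8)%N -> x n = y n) -> Gf q x = Gf q y.
Proof. by move=> H; rewrite /Gf /Yf /= !H. Qed.

Lemma zp_ker n' (z : int) : (z%:~R : 'Z_(n'.+2)) = 0 <-> (n'.+2 %| z)%Z.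
Proof.
case: z => m /=.
- rewrite [X in X = _ <-> _](_ : _ = m%:R) // Zp_nat; split.
    by move/(congr1 val) => /= /eqP.
  by move=> H; apply/val_inj => /=; apply/eqP.
- rewrite NegzE intrN; split.
    move/eqP; rewrite oppr_eq0 => /eqP.
    rewrite [X in X = _ -> _](_ : _ = m.+1%:R) // Zp_nat.
    by move/(congr1 val) => /= /eqP.
  move=> H; apply/eqP; rewrite oppr_eq0; apply/eqP.
  rewrite [X in X = _](_ : _ = m.+1%:R) // Zp_nat.
  by apply/val_inj => /=; apply/eqP.
Qed.

Lemma phi_ge (q : nat) : (2 <= q)%N -> (q ^ 5 + q ^ 4 + q ^ 3 <= q ^ 8 + q ^ 7)%N.
Proof.
move=> q2.
have q0 : (0 < q)%N by apply: ltnW.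
have h1 : (q ^ 3 <= q ^ 4)%N by apply: leq_pexp2l.
have h2 : (q ^ 4 * 2 <= q ^ 5)%N by rewrite [(q ^ 5)%N]expnSr leq_mul2l q2 orbT.
have h3 : (q ^ 5 <= q ^ 7)%N by apply: leq_pexp2l.
have h4 : (q ^ 5 <= q ^ 8)%N by apply: leq_pexp2l.
rewrite -addnA; apply: leq_add => //.
apply: leq_trans h3; apply: leq_trans h2; rewrite muln2 -addnn leq_add2l //.
Qed.

Lemma phi_Nz (q : nat) : (2 <= q)%N -> (Phi30 q)%:Z = Nz q%:Z.
Proof.
move=> q2; have h := phi_ge _ q2.
rewrite /Phi30 -subzn; last by apply: leq_trans h _; rewrite -addnA leq_addr.
rewrite !PoszD -!natz !natrX /Nz; ring.
Qed.

Lemma phi_gt1 (q : nat) : (2 <= q)%N -> (1 < Phi30 q)%N.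
Proof.
move=> q2; have h := phi_ge _ q2; rewrite /Phi30.
lia.
Qed.

Lemma colE (u : 'cV[int]_8) : u = \col_i (fun n => u (inord n) 0) i.
Proof. by apply/matrixP => i j; rewrite !mxE ord1 inord_val. Qed.

Theorem mainTheorem6 (q : nat)
  (hq : exists p k : nat, [/\ prime p, (0 < k)%N & q = (p ^ k)%N]) :
  exists f : 'cV[int]_8 -> 'Z_(Phi30 q),
    [/\ (forall u v, f (u + v) = f u + f v),
        (forall y, exists x, f x = y)
      & (forall v, f v = 0 <-> exists u, v = qw_minus_id q *m u)].
Proof.
have q2 : (2 <= q)%N.
  case: hq => p [k [pp k0 ->]].
  apply: leq_trans (prime_gt1 pp) _.
  by rewrite -[X in (X <= _)%N]expn1 leq_pexp2l // prime_gt0.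
have hNz := phi_Nz _ q2.
have [n' hN] : exists n', Phi30 q = n'.+2.
  by move: (phi_gt1 _ q2); case: (Phi30 q) => [|[|n']] // _; exists n'.
rewrite hN in hNz *.
pose G (v : 'cV[int]_8) := Gf q%:Z (fun n => v (inord n) 0).
exists (fun v => ((G v)%:~R : 'Z_(n'.+2))); split.
- move=> u v; rewrite -intrD; congr (_%:~R).
  rewrite /G (@Gf_ext _ _ (fun n => u (inord n) 0 + v (inord n) 0)); last first.
    by move=> n _; rewrite !mxE.
  by rewrite /Gf /Yf /=; ring.
- move=> y; exists (\col_i ((nat_of_ord y)%:Z * nth 0 b7 i)).
  rewrite /G (@Gf_ext _ _ (fun n => (nat_of_ord y)%:Z * nth 0 b7 n)); last first.
    by move=> n Hn; rewrite !mxE inordK.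
  by rewrite key3 [X in X = _](_ : _ = (nat_of_ord y)%:R) // natr_Zp.
- move=> v; rewrite zp_ker; split.
  + rewrite hNz => /dvdzP [k hk].
    exists (\col_i Uf q%:Z k (fun n => v (inord n) 0) i).
    apply/matrixP => i j; rewrite ord1 -[i]inord_val Mcol //.
    by rewrite (key2 _ _ _ hk).
  + move=> [u ->]; rewrite hNz; apply/dvdzP; exists (- Yf (fun n => u (inord n) 0) 7).
    rewrite /G (@Gf_ext _ _ (Mxf q%:Z (fun n => u (inord n) 0))); last first.
      by move=> n Hn; rewrite /= [in X in X = _](colE u); apply: (Mcol q (fun n => u (inord n) 0)).
    rewrite (key1 q%:Z (fun n => u (inord n) 0)).  ring.
Qed.
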